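(* Let $\mathcal F$ be any r-forest in $G$. Then there exists a $\hat G$-r-forest $\hat{\mathcal F}$ such that $\hat F(\hat{\mathcal F})\le F(\mathcal F)$ and $\hat{\mathcal F}$ has at most $2r-2$ non-terminal vertices.
   Context: Let $G=(V,E)$ be a connected undirected network with $n$ vertices and edge lengths $c_e>0$. Let $\mathcal R=\{\{v_1,u_1\},\dots,\{v_r,u_r\}\}$ be a set of $r\ge2$ relevant pairs (r-pairs) of vertices, with $r$ a fixed constant. The objective $\Phi$ is a non-decreasing function of the connection times $(t_{\{v_i,u_i\}})_{i=1}^r$, computable in $O(r)$ time from them. A terminal vertex is a vertex belonging to some r-pair. An r-forest is a subnetwork $\mathcal F$ of the network such that: (a) $\mathcal F$ is a forest; (b) every r-pair $\{v,u\}$ is joined by a (unique) path $P_{\mathcal F}(v,u)$ in $\mathcal F$; (c) every edge of $\mathcal F$ lies on $P_{\mathcal F}(v,u)$ for some r-pair $\{v,u\}$. For an r-forest $\mathcal F$, consider orderings $(e_1,\dots,e_f)$ of all edges of $\mathcal F$, built consecutively at unit speed from time $0$, so that $e_k$ is completed at time $\sum_{j\le k}c_{e_j}$. The connection time of an r-pair is the completion time of the last-built edge of its path in $\mathcal F$. $F(\mathcal F)$ denotes the minimum of $\Phi$ over all such orderings. This is the best objective value achievable when $\mathcal F$ is the set of edges built before all r-pairs are connected. $\hat G$ is the metric closure of $G$: the complete network on $V$ in which the length of edge $(u,v)$ equals the shortest-path distance between $u$ and $v$ in $G$. A $\hat G$-r-forest is an r-forest in $\hat G$ (for the same r-pairs).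 For a $\hat G$-r-forest $\hat{\mathcal F}$, $\hat F(\hat{\mathcal F})$ is defined as $F(\cdot)$ above but with $\hat G$-lengths. A non-terminal vertex of $\hat{\mathcal F}$ is a vertex of $\hat{\mathcal F}$ that is not a terminal vertex. *)

(* Defs.v *)
From HB Require Import structures.
From mathcomp Require Import all_boot all_order all_algebra.
From mathcomp Require Import boolp.
Set Implicit Arguments. Unset Strict Implicit. Unset Printing Implicit Defensive.
Import Order.TTheory GRing.Theory Num.Theory.
Local Open Scope ring_scope.

(* A (simple, undirected) network on the finite vertex type V is a set of
   edges E : {set {set V}}, each edge being a 2-element set {u,v}, together
   with an edge-length function c : {set V} -> R. *)

Section Defs.
Variables (V : finType) (R : realFieldType).

Definition adj (F : {set {set V}}) (x y : V) : bool := [set x; y] \in F.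

(* p is a walk from x to y in F (x :: p is the vertex sequence) *)
Definition walk (F : {set {set V}}) (x : V) (p : seq V) (y : V) : bool :=
  path (adj F) x p && (last x p == y).

Definition walk_len (c : {set V} -> R) (x : V) (p : seq V) : R :=
  \sum_(ab <- zip (x :: p) p) c [set ab.1; ab.2].

Definition walk_uses (e : {set V}) (x : V) (p : seq V) : bool :=
  has (fun ab : V * V => [set ab.1; ab.2] == e) (zip (x :: p) p).

Definition connected (E : {set {set V}}) : Prop :=
  forall x y : V, exists p, walk E x p y.

Definition is_sp_dist (E : {set {set V}}) (c : {set V} -> R) (x y : V) (d : R)
  : Prop :=
  (exists p, walk E x p y /\ walk_len c x p = d) /\
  (forall p, walk E x p y -> d <= walk_len c x p).

(* a cycle: at least 3 distinct vertices, consecutive ones adjacent, closed *)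
Definition is_forest (F : {set {set V}}) : Prop :=
  ~ exists (x : V) (p : seq V),
      [/\ uniq (x :: p), (2 <= size p)%N, path (adj F) x p & adj F (last x p) x].

Definition on_path (F : {set {set V}}) (v u : V) (e : {set V}) : Prop :=
  exists p, [/\ walk F v p u, uniq (v :: p) & walk_uses e v p].

Definition r_forest (E : {set {set V}}) (r : nat) (pairs : 'I_r -> V * V)
  (F : {set {set V}}) : Prop :=
  [/\ F \subset E,
      is_forest F,
      (forall i, exists p, walk F (pairs i).1 p (pairs i).2) &
      (forall e, e \in F -> exists i, on_path F (pairs i).1 (pairs i).2 e)].

Definition completion (c : {set V} -> R) (s : seq {set V}) (e : {set V}) : R :=
  \sum_(e' <- take (index e s).+1 s) c e'.

Definition conn_time (F : {set {set V}}) (c : {set V} -> R)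
  (s : seq {set V}) (v u : V) : R :=
  \big[Num.max/0]_(e <- s | `[< on_path F v u e >]) completion c s e.

Definition obj (r : nat) (pairs : 'I_r -> V * V) (Phi : ('I_r -> R) -> R)
  (F : {set {set V}}) (c : {set V} -> R) : R :=
  let val s := Phi (fun i => conn_time F c s (pairs i).1 (pairs i).2) in
  foldr (fun s acc => Num.min (val s) acc) (val (enum F))
        (permutations (enum F)).

Definition terminals (r : nat) (pairs : 'I_r -> V * V) : {set V} :=
  [set x | [exists i, (x == (pairs i).1) || (x == (pairs i).2)]].

Definition forest_vertices (F : {set {set V}}) : {set V} :=
  \bigcup_(e in F) e.

Definition nonterminals (r : nat) (pairs : 'I_r -> V * V)
  (F : {set {set V}}) : {set V} :=
  forest_vertices F :\: terminals pairs.

(* edge set of the metric closure: all pairs of distinct vertices *)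
Definition complete_edges : {set {set V}} := [set e : {set V} | #|e| == 2].

End Defs.

(* Main.v *)
Require Import Defs.
From HB Require Import structures.
From mathcomp Require Import all_boot all_order all_algebra zify boolp lra.
Import Order.TTheory GRing.Theory Num.Theory.
Set Implicit Arguments. Unset Strict Implicit. Unset Printing Implicit Defensive.

Section Graph.
Variable V : finType.
Implicit Types (G : {set {set V}}) (x y z w a b : V) (p q : seq V).

Definition simpleG G := forall e, e \in G -> #|e| = 2.

Lemma adjC G x y : adj G x y = adj G y x.
Proof. by rewrite /adj setUC. Qed.

Lemma adj_neq G x y : simpleG G -> adj G x y -> x != y.
Proof.
move=> HG Hxy; apply/eqP=> exy; subst y.
by have := HG _ Hxy; rewrite setUid cards1.
Qed.

Lemma edge2 G e v : simpleG G -> e \in G -> v \in e ->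
  exists z, z != v /\ e = [set v; z].
Proof.
move=> HG He Hv; have /eqP/cards2P [x [y [nxy exy]]] := HG _ He.
subst e; move: Hv; rewrite in_set2 => /orP [] /eqP ->.
  by exists y; rewrite eq_sym.
by exists x; split => //; rewrite setUC.
Qed.

Lemma walk_uses_cons e x y p :
  walk_uses e x (y :: p) = ([set x; y] == e) || walk_uses e y p.
Proof. by []. Qed.

Lemma walk_uses_nil e x : walk_uses e x [::] = false.
Proof. by []. Qed.

Lemma walk_uses_mem e x p v : walk_uses e x p -> v \in e -> v \in x :: p.
Proof.
elim: p x => [|y p IH] x //; rewrite walk_uses_cons => /orP [/eqP <-|].
  by rewrite in_set2 !inE => /orP [] ->; rewrite ?orbT.
by move=> /IH H /H Hv; rewrite inE Hv orbT.
Qed.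

Lemma path_sub G1 G2 x p : G1 \subset G2 -> path (adj G1) x p -> path (adj G2) x p.
Proof.
move=> /subsetP S; apply: sub_path => u v; rewrite /adj; exact: S.
Qed.

Lemma forest_sub G1 G2 : G1 \subset G2 -> is_forest G2 -> is_forest G1.
Proof.
move=> S HF [x [p [U Sz P A]]]; apply: HF; exists x, p; split => //.
  exact: path_sub P.
by move/subsetP: S; apply.
Qed.

Lemma interior G x p v : path (adj G) x p -> uniq (x :: p) -> v \in p ->
  v != last x p -> exists y z, [/\ y != z, adj G y v & adj G v z].
Proof.
move=> P U Hv; move: P U; case/splitPr: Hv => p1 p2.
case: p2 => [|z p2] P U.
  by rewrite last_cat /= eqxx.
move=> _; exists (last x p1), z.
move: P; rewrite cat_path /= => /and3P [_ H1 /andP [H2 _]].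
split => //.
move: U; rewrite -cat_cons cat_uniq => /and3P [_ D _].
apply/eqP => E; move: D.
have Hz : z \in x :: p1 by rewrite -E mem_last.
by rewrite /= Hz !orbT.
Qed.


Definition deg G v := #|[set e in G | v \in e]|.

Lemma in_Vf G v : reflect (exists2 e, e \in G & v \in e) (v \in forest_vertices G).
Proof. exact: bigcupP. Qed.

Lemma deg_pos G v : v \in forest_vertices G -> 0 < deg G v.
Proof.
move/in_Vf=> [e He Hv]; rewrite /deg card_gt0; apply/set0Pn; exists e.
by rewrite inE He Hv.
Qed.

Lemma adj_Vf G x y : adj G x y -> y \in forest_vertices G.
Proof. by move=> H; apply/in_Vf; exists [set x; y] => //; rewrite set22. Qed.

Lemma nbr G v z0 : simpleG G -> 1 < deg G v -> exists z, adj G v z /\ z != z0.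
Proof.
move=> HG /card_gt1P [e1 [e2 [H1 H2 ne]]].
move: H1 H2; rewrite !inE => /andP [H1 V1] /andP [H2 V2].
have [z1 [nz1 E1]] := edge2 HG H1 V1.
have [z2 [nz2 E2]] := edge2 HG H2 V2.
have nz : z1 != z2 by apply: contraNneq ne => ez; rewrite E1 E2 ez.
case: (eqVneq z1 z0) => [ez|nz0].
  exists z2; split; first by rewrite /adj -E2.
  by rewrite -ez eq_sym.
by exists z1; split => //; rewrite /adj -E1.
Qed.

Lemma uniq_size (s : seq V) : uniq s -> size s <= #|V|.
Proof. by move/card_uniqP <-; exact: max_card. Qed.

Lemma leaf_exists G x : is_forest G -> simpleG G -> x \in forest_vertices G ->
  exists2 w, w \in forest_vertices G & deg G w < 2.
Proof.
move=> HF HG Hx.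
case: (boolP [exists w, (w \in forest_vertices G) && (deg G w < 2)]).
  by move/existsP => [w /andP [H1 H2]]; exists w.
move=> /existsPn Hall.
have Hd : forall w, w \in forest_vertices G -> 1 < deg G w.
  by move=> w Hw; move: (Hall w); rewrite Hw /= -leqNgt.
exfalso.
suff : forall k y p, path (adj G) y p -> uniq (y :: p) ->
  y \in forest_vertices G -> #|V| - size p <= k -> False.
  by move/(_ #|V| x [::]); apply => //; rewrite subn0.
elim=> [|k IH] y p P U Hy Hk.
  have := uniq_size U. move=> /= HH. by rewrite leqn0 subn_eq0 leqNgt HH in Hk.
have [z [Az nz]] := nbr (head y p) HG (Hd _ Hy).
case: (boolP (z \in y :: p)) => Hz.
  have zy : z != y by rewrite eq_sym (adj_neq HG Az).
  move: Hz; rewrite inE (negbTE zy) /= => Hz.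
  move: P U nz; case/splitPr: Hz => p1 p2 P U nz.
  apply: HF; exists y, (rcons p1 z); split.
  - apply: subseq_uniq U; rewrite -cats1 /=.
    rewrite eqxx; apply: cat_subseq => //; by rewrite sub1seq mem_head.
  - case: p1 P U nz => [|t p1] //= P U nz; first by rewrite eqxx in nz.
    by rewrite size_rcons.
  - by move: P; rewrite cat_path rcons_path /= => /and3P [-> ->].
  - by rewrite last_rcons adjC.
apply: (IH z (y :: p)) => //=.
- by rewrite adjC Az.
- by rewrite Hz.
- exact: adj_Vf Az.
- have := uniq_size U; move: Hk => /=; move: (#|V|) => N; lia.
Qed.

Lemma edge_bound G : is_forest G -> simpleG G -> G != set0 ->
  #|G| < #|forest_vertices G|.
Proof.
move Hn : #|G| => n; elim: n G Hn => [|n IH] G Hn HF HG HG0.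
  by move: HG0; rewrite -card_gt0 Hn.
have [e0 He0] := set0Pn _ HG0.
have [v Hv] : exists v, v \in e0.
  by apply/set0Pn; rewrite -card_gt0 (HG _ He0).
have HvV : v \in forest_vertices G by apply/in_Vf; exists e0.
have [w Hw Hdw] := leaf_exists HF HG HvV.
have /cards1P [e De] : deg G w == 1.
  by move: Hdw (deg_pos Hw); case: (deg G w) => [|[|]].
have : e \in [set e in G | w \in e] by rewrite De set11.
rewrite inE => /andP [He Hwe].
set G' := G :\ e.
have HG'n : #|G'| = n by move: Hn; rewrite (cardsD1 e) He add1n => -[].
have HF' : is_forest G' by apply: forest_sub HF; exact: subsetDl.
have HGG' : simpleG G' by move=> f; rewrite inE => /andP [_ /HG].
have Hsub : forest_vertices G' \subset forest_vertices G :\ w.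
  apply/subsetP => u /in_Vf [f Hf Hu]; move: Hf; rewrite !inE => /andP [nf Hf].
  apply/andP; split; last by apply/in_Vf; exists f.
  apply/eqP => euw; subst u.
  have : f \in [set e in G | w \in e] by rewrite inE Hf Hu.
  by rewrite De inE (negbTE nf).
have Hc := subset_leq_card Hsub.
have Hc' : #|forest_vertices G| = (#|forest_vertices G :\ w|).+1.
  by rewrite (cardsD1 w) Hw.
case: (eqVneq G' set0) => HG'0.
  have HGe : G = [set e].
    apply/setP => f; rewrite inE; apply/idP/idP => [Hf|/eqP -> //].
    apply/negPn/negP => nf.
    have : f \in G' by rewrite !inE nf Hf.
    by rewrite HG'0 inE.
  rewrite -Hn {1}HGe cards1.
  have : e \subset forest_vertices G.
    by apply/subsetP => u Hu; apply/in_Vf; exists e.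
  by move/subset_leq_card; rewrite (HG _ He).
have := IH G' HG'n HF' HGG' HG'0.
rewrite Hc'; move: Hc; move: (#|forest_vertices G'|) (#|forest_vertices G :\ w|) => A B.
lia.
Qed.

Lemma deg_sum G : simpleG G ->
  \sum_(v in forest_vertices G) deg G v = 2 * #|G|.
Proof.
move=> HG.
have -> : \sum_(v in forest_vertices G) deg G v =
          \sum_(v in forest_vertices G) \sum_(e | (e \in G) && (v \in e)) 1.
  apply: eq_bigr => v _; rewrite /deg -sum1_card.
  by apply: eq_bigl => e; rewrite inE.
rewrite (exchange_big_dep (fun e => e \in G)); last by move=> ? ? _ /andP [].
rewrite /=; transitivity (\sum_(e in G) 2); last by rewrite sum_nat_const mulnC.
apply: eq_bigr => e He.
rewrite -(HG _ He) -sum1_card; apply: eq_bigl => v.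
apply/idP/idP => [/and3P [] //|Hv]; rewrite He Hv andbT.
by rewrite andbT; apply/in_Vf; exists e.
Qed.

Section Pairs.
Variables (r : nat) (pairs : 'I_r -> V * V).

Lemma notterm v : v \notin terminals pairs -> forall i, v != (pairs i).1 /\ v != (pairs i).2.
Proof.
move=> Hv i; move: Hv; rewrite inE => /existsPn /(_ i); rewrite negb_or.
by case/andP.
Qed.

Lemma terminals_card : #|terminals pairs| <= 2 * r.
Proof.
have S : terminals pairs \subset
   [set (pairs i).1 | i : 'I_r] :|: [set (pairs i).2 | i : 'I_r].
  apply/subsetP => v; rewrite inE => /existsP [i /orP [] /eqP ->].
    by rewrite inE; apply/orP; left; apply/imsetP; exists i.
  by rewrite inE; apply/orP; right; apply/imsetP; exists i.
apply: leq_trans (subset_leq_card S) _.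
apply: leq_trans (leq_card_setU _ _) _.
have := leq_imset_card (fun i => (pairs i).1) 'I_r.
have := leq_imset_card (fun i => (pairs i).2) 'I_r.
rewrite card_ord.
move: (#|_|) (#|_|) => A B; lia.
Qed.

Lemma simple_complete G : G \subset complete_edges V -> simpleG G.
Proof. by move=> /subsetP S e /S; rewrite inE => /eqP. Qed.

Lemma nonterm_deg G v : r_forest (complete_edges V) pairs G ->
  v \in nonterminals pairs G -> 1 < deg G v.
Proof.
move=> [HS HF Hc Hp] ; have HG := simple_complete HS.
rewrite inE => /andP [Hnt /in_Vf [e He Hve]].
have [i [p [/andP [P /eqP L] U W]]] := Hp e He.
have [n1 n2] := notterm Hnt i.
have : v \in (pairs i).1 :: p := walk_uses_mem W Hve.
rewrite inE (negbTE n1) /= => Hvp.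
have HL : v != last (pairs i).1 p by rewrite L.
have [y [z [nyz A1 A2]]] := interior P U Hvp HL.
apply/card_gt1P; exists [set y; v], [set v; z]; split.
- by rewrite inE set22 andbT; exact: A1.
- by rewrite inE set21 andbT; exact: A2.
apply/eqP => E.
have : y \in [set v; z] by rewrite -E set21.
rewrite in_set2 (negbTE nyz) orbF => /eqP eyv.
by move: (adj_neq HG A1); rewrite eyv eqxx.
Qed.

Lemma count_nonterm G : r_forest (complete_edges V) pairs G ->
  (forall v, v \in nonterminals pairs G -> deg G v != 2) ->
  #|nonterminals pairs G| <= 2 * r - 2.
Proof.
move=> HR Hd; have HR' := HR; case: HR' => [HS HF _ _]; have HG := simple_complete HS.
case: (eqVneq G set0) => HG0.
  suff -> : nonterminals pairs G = set0 by rewrite cards0.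
  apply/setP => v; rewrite [RHS]inE; apply: negbTE; rewrite inE; apply/negP => /andP [_ /in_Vf [e]].
  by rewrite HG0 inE.
have EB := edge_bound HF HG HG0.
have DS := deg_sum HG.
rewrite (big_setID (terminals pairs)) /= in DS.
set T := forest_vertices G :&: terminals pairs in DS.
have E1 : \sum_(v in T) 1 <= \sum_(v in T) deg G v.
  apply: leq_sum => v; rewrite inE => /andP [Hv _]; exact: deg_pos.
have E2 : \sum_(v in nonterminals pairs G) 3 <= \sum_(v in nonterminals pairs G) deg G v.
  apply: leq_sum => v Hv.
  have := nonterm_deg HR Hv; have := Hd v Hv; move: (deg G v) => d; lia.
rewrite sum1_card in E1; rewrite sum_nat_const in E2.
have CV := cardsID (terminals pairs) (forest_vertices G).
have TC : #|T| <= 2 * r.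
  apply: leq_trans (terminals_card); apply: subset_leq_card; exact: subsetIr.
rewrite /nonterminals in E2 DS *.
move: E1 E2 DS EB CV TC.
move: (\sum_(v in T) deg G v) (\sum_(i in forest_vertices G :\: terminals pairs) deg G i).
move=> s1 s2; rewrite /T; move: #|forest_vertices G :&: terminals pairs| #|forest_vertices G :\: terminals pairs| #|G| #|forest_vertices G| => A B C D.
lia.
Qed.

End Pairs.

Section Obj.
Variable R : realFieldType.
Local Open Scope ring_scope.
Implicit Types (c : {set V} -> R) (s t : seq {set V}).

Lemma completion_in c s1 t (e : {set V}) : e \in s1 -> completion c (s1 ++ t) e = completion c s1 e.
Proof.
by move=> He; rewrite /completion index_cat He takel_cat // index_mem.
Qed.

Lemma completion_out c s1 t (e : {set V}) : e \notin s1 ->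
  completion c (s1 ++ t) e = \sum_(x <- s1) c x + completion c t e.
Proof.
move=> He; rewrite /completion index_cat (negbTE He) take_cat.
rewrite ltnNge -addnS leq_addr /= big_cat; congr (_ + _).
by rewrite addKn.
Qed.

Lemma completion_head c (x : {set V}) t : completion c (x :: t) x = c x.
Proof. by rewrite /completion /= eqxx /= take0 big_seq1. Qed.

Lemma completion_cons c (x : {set V}) t e : e != x -> completion c (x :: t) e = c x + completion c t e.
Proof.
move=> ne; rewrite -cat1s completion_out ?big_seq1 // inE eq_sym.
by apply/negP => /eqP E; rewrite E eqxx in ne.
Qed.

Lemma compare_completion c s1 s2 s3 (x y z : {set V}) :
  uniq (s1 ++ x :: s2 ++ y :: s3) -> z \notin s1 ++ x :: s2 ++ y :: s3 ->
  0 <= c x -> c z <= c x + c y ->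
  (forall e, e \in s1 ++ s2 ++ z :: s3 -> e != z ->
     completion c (s1 ++ s2 ++ z :: s3) e <= completion c (s1 ++ x :: s2 ++ y :: s3) e) /\
  completion c (s1 ++ s2 ++ z :: s3) z <= completion c (s1 ++ x :: s2 ++ y :: s3) y.
Proof.
move=> U Hz cx cz.
have P : perm_eq (s1 ++ x :: s2 ++ y :: s3) (x :: y :: (s1 ++ s2 ++ s3)).
  apply/permP => q; rewrite /= !count_cat /= ?count_cat /=.
  move: (q x) (q y) => [] []; move: (count q s1) (count q s2) (count q s3) => n1 n2 n3 /=; lia.
have U' := U; rewrite (perm_uniq P) !cons_uniq in_cons !mem_cat !negb_or in U'.
case/and3P: U' => /and4P [nxy nx1 nx2 nx3] /and3P [ny1 ny2 ny3] U'.
move: Hz; rewrite mem_cat in_cons mem_cat in_cons !negb_or => /and5P [nz1 nzx nz2 nzy nz3].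
split.
  move=> e He nez.
  case: (boolP (e \in s1)) => e1; first by rewrite !completion_in.
  rewrite (completion_out _ (s2 ++ z :: s3) e1) (completion_out _ (x :: s2 ++ y :: s3) e1).
  rewrite lerD2l.
  have nex : e != x.
    apply/eqP => E; move: He; rewrite E mem_cat mem_cat in_cons (negbTE nx1) (negbTE nx2).
    by rewrite (negbTE nx3) eq_sym (negbTE nzx).
  rewrite completion_cons //.
  case: (boolP (e \in s2)) => e2.
    by rewrite !completion_in // lerDr.
  have e3 : e \in s3.
    by move: He; rewrite mem_cat mem_cat in_cons (negbTE e1) (negbTE e2) (negbTE nez).
  have ney : e != y by apply/eqP => E; rewrite E (negbTE ny3) in e3.
  rewrite !completion_out // !completion_cons //.
  lra.
rewrite (completion_out _ (s2 ++ z :: s3) nz1) (completion_out _ (x :: s2 ++ y :: s3) ny1).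
have nyx : y != x by rewrite eq_sym.
rewrite (completion_out _ _ nz2) completion_head (completion_cons _ _ nyx).
rewrite (completion_out _ _ ny2) completion_head.
lra.
Qed.

Lemma bigmax_le (s : seq {set V}) (P : pred {set V}) (f : {set V} -> R) M :
  0 <= M -> (forall e, e \in s -> P e -> f e <= M) ->
  \big[Num.max/0]_(e <- s | P e) f e <= M.
Proof.
elim: s => [|e s IH] H0 H; first by rewrite big_nil.
have IH' : \big[Num.max/0]_(e <- s | P e) f e <= M.
  by apply: IH => // e' He'; apply: H; rewrite inE He' orbT.
rewrite big_cons; case: ifP => Pe //; rewrite ge_max IH' andbT.
by apply: H; rewrite ?mem_head.
Qed.

Lemma bigmax_ge0 (s : seq {set V}) (P : pred {set V}) (f : {set V} -> R) :
  0 <= \big[Num.max/0]_(e <- s | P e) f e.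
Proof.
elim: s => [|e s IH]; first by rewrite big_nil.
by rewrite big_cons; case: ifP => _ //; rewrite le_max IH orbT.
Qed.

Lemma le_bigmax (s : seq {set V}) (P : pred {set V}) (f : {set V} -> R) e :
  e \in s -> P e -> f e <= \big[Num.max/0]_(e <- s | P e) f e.
Proof.
elim: s => [|e' s IH] //; rewrite inE => /orP [/eqP <-|Hs] Pe; rewrite big_cons.
  by rewrite Pe le_max lexx.
by case: ifP => _; rewrite ?le_max IH ?orbT.
Qed.

Lemma foldr_min_le (T : eqType) (f : T -> R) (a0 : R) (l : seq T) (x : T) : x \in l ->
  foldr (fun (k : T) acc => Num.min (f k) acc) a0 l <= f x.
Proof.
elim: l => [|y l IH] //; rewrite inE => /orP [/eqP ->|H] /=; rewrite ge_min ?lexx //.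
by rewrite IH ?orbT.
Qed.

Lemma foldr_min_attain (T : eqType) (f : T -> R) (x0 : T) (l : seq T) :
  exists2 x : T, (x == x0) || (x \in l) & foldr (fun (k : T) acc => Num.min (f k) acc) (f x0) l = f x.
Proof.
elim: l => [|y l [x Hx IH]] /=; first by exists x0; rewrite ?eqxx.
rewrite IH; case: (leP (f y) (f x)) => H.
  by exists y; rewrite ?inE ?eqxx ?orbT // min_l.
exists x; first by move: Hx; rewrite inE => /orP [->|->]; rewrite ?orbT.
by [].
Qed.

Lemma foldr_min_mono (T : eqType) (f g : T -> R) (x0 : T) (l : seq T) :
  (forall k : T, (k == x0) || (k \in l) -> f k <= g k) ->
  foldr (fun (k : T) acc => Num.min (f k) acc) (f x0) l <=
  foldr (fun (k : T) acc => Num.min (g k) acc) (g x0) l.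
Proof.
elim: l => [|y l IH] H /=; first by apply: H; rewrite eqxx.
have H1 : f y <= g y by apply: H; rewrite inE eqxx orbT.
have H2 : foldr (fun (k : T) acc => Num.min (f k) acc) (f x0) l <=
  foldr (fun (k : T) acc => Num.min (g k) acc) (g x0) l.
  apply: IH => k /orP [Hk|Hk]; apply: H; rewrite ?Hk // inE Hk !orbT //.
rewrite le_min !ge_min H1 H2 !orbT //.
Qed.

Variables (r : nat) (pairs : 'I_r -> V * V) (Phi : ('I_r -> R) -> R).

Definition valf (G : {set {set V}}) c s :=
  Phi (fun i => conn_time G c s (pairs i).1 (pairs i).2).

Lemma obj_le G c s : perm_eq s (enum G) -> obj pairs Phi G c <= valf G c s.
Proof.
move=> P; rewrite /obj; apply: (foldr_min_le (fun s => valf G c s)).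
by rewrite mem_permutations.
Qed.

Lemma obj_attain G c : exists2 s, perm_eq s (enum G) & obj pairs Phi G c = valf G c s.
Proof.
have [x Hx E] := foldr_min_attain (fun s => valf G c s) (enum G) (permutations (enum G)).
exists x; last by rewrite /obj E.
by case/orP: Hx => [/eqP ->|]; rewrite ?perm_refl // mem_permutations.
Qed.

Lemma obj_mono G c c' :
  (forall s, perm_eq s (enum G) -> valf G c s <= valf G c' s) -> obj pairs Phi G c <= obj pairs Phi G c'.
Proof.
move=> H; apply: (@foldr_min_mono _ (valf G c) (valf G c') (enum G)).
move=> k /orP [/eqP ->|]; first by apply: H; rewrite perm_refl.
by rewrite mem_permutations; apply: H.
Qed.

End Obj.

Section Shortcut.
Variables (G : {set {set V}}) (w a b : V).
Hypotheses (HG : simpleG G) (Hab : a != b) (Hwa : w != a) (Hwb : w != b)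
  (He1 : [set w; a] \in G) (He2 : [set w; b] \in G)
  (Hdeg : forall e, e \in G -> w \in e -> e = [set w; a] \/ e = [set w; b]).

Definition G' := [set a; b] |: ((G :\ [set w; a]) :\ [set w; b]).

Lemma set2_in x y z : [set x; y] = [set w; z] -> x != w -> x = z.
Proof.
move=> E nx; have : x \in [set w; z] by rewrite -E set21.
by rewrite in_set2 (negbTE nx) => /eqP.
Qed.

Lemma nbr_w x : adj G x w -> (x == a) || (x == b).
Proof.
move=> A; have nx := adj_neq HG A.
have [E|E] := Hdeg A (set22 _ _).
  by rewrite (set2_in E nx) eqxx.
by rewrite (set2_in E nx) eqxx orbT.
Qed.

Lemma adj_ab_w x : (x == a) || (x == b) -> adj G x w /\ adj G w x.
Proof.
by case/orP => /eqP ->; rewrite /adj setUC; split => //; rewrite setUC.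
Qed.

Lemma ab_set x z : (x == a) || (x == b) -> (z == a) || (z == b) -> x != z ->
  [set x; z] = [set a; b].
Proof.
case/orP => /eqP -> /orP [] /eqP -> //; rewrite ?eqxx //.
by rewrite setUC.
Qed.

Lemma ab_mem x z : [set x; z] = [set a; b] -> ((x == a) || (x == b)) && ((z == a) || (z == b)).
Proof. by move=> E; rewrite -!in_set2 -E set21 set22. Qed.

Lemma G'_now e : e \in G' -> w \notin e.
Proof.
rewrite !inE => /orP [/eqP ->|/and3P [n2 n1 He]].
  by rewrite in_set2 negb_or Hwa Hwb.
apply/negP => Hw; have [E|E] := Hdeg He Hw.
  by rewrite E eqxx in n1.
by rewrite E eqxx in n2.
Qed.

Lemma G'_G e : e \in G' -> e != [set a; b] -> e \in G.
Proof. by rewrite !inE => /orP [->//|/and3P [_ _ ->]]. Qed.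

Lemma notw_set x y (e : {set V}) : x != w -> y != w -> w \in e -> [set x; y] != e.
Proof.
move=> nx ny Hw; apply/eqP => E; move: Hw; rewrite -E in_set2.
by rewrite !(eq_sym w) (negbTE nx) (negbTE ny).
Qed.

Lemma adj_G_G' x y : adj G x y -> x != w -> y != w -> adj G' x y.
Proof.
move=> A nx ny; rewrite /adj /G' !inE.
rewrite (notw_set nx ny (set21 w a)) (notw_set nx ny (set21 w b)).
by rewrite orbC; apply/orP; left; exact: A.
Qed.

Lemma contract k x p : size p <= k -> path (adj G) x p -> uniq (x :: p) ->
  x != w -> last x p != w ->
  [/\ path (adj G') x (filter (predC1 w) p),
      last x (filter (predC1 w) p) = last x p,
      (forall e : {set V}, w \notin e -> walk_uses e x p -> walk_uses e x (filter (predC1 w) p)) &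
      (w \in p -> walk_uses [set a; b] x (filter (predC1 w) p))].
Proof.
elim: k x p => [|k IH] x [|y p] //= Sz P U nx L.
case: (eqVneq y w) => [eyw|nyw].
  subst y; case: p Sz P U L => [|z p] Sz P U L; first by rewrite eqxx in L.
  move: P => /= /and3P [A1 A2 P].
  move: U; rewrite /= !inE !negb_or => /andP [/and3P [nxw nxz nxp] /andP [/andP [nwz nwp] U]].
  have nzw : z != w by rewrite eq_sym.
  have [P' L' W1 W2] := IH z p (ltnW Sz) P U nzw L.
  rewrite /= eqxx /= nzw /=.
  have Eab : [set x; z] = [set a; b].
    by apply: ab_set => //; [exact: nbr_w A1 | apply: nbr_w; rewrite adjC].
  split.
  - by rewrite P' andbT /adj Eab /G' setU11.
  - by [].
  - move=> e Hwe; rewrite !walk_uses_cons => /or3P [/eqP E|/eqP E|W].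
    + by move: Hwe; rewrite -E set22.
    + by move: Hwe; rewrite -E set21.
    + by rewrite W1 // orbT.
  - by rewrite walk_uses_cons Eab eqxx.
move: U; rewrite /= inE negb_or => /andP [/andP [nxy nxp] U].
move: P => /andP [A P].
have [P' L' W1 W2] := IH y p Sz P U nyw L.
split.
- by rewrite P' andbT; apply: adj_G_G'.
- by [].
- by move=> e Hwe; rewrite !walk_uses_cons => /orP [->//|W]; rewrite W1 // orbT.
- by rewrite inE eq_sym (negbTE nyw) /= => Hw; rewrite walk_uses_cons W2 // orbT.
Qed.

Fixpoint ex x p := if p is y :: q then
  (if [set x; y] == [set a; b] then w :: y :: ex y q else y :: ex y q) else [::].

Lemma ex_id x p : a \notin p -> b \notin p -> ex x p = p.
Proof.
elim: p x => [|y p IH] x //=; rewrite !inE !negb_or => /andP [nay nap] /andP [nby nbp].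
rewrite IH //; case: ifP => // /eqP E.
by have := ab_mem E; rewrite !(eq_sym y) (negbTE nay) (negbTE nby) andbF.
Qed.

Lemma mem_ex x p z : z \in ex x p -> (z == w) || (z \in p).
Proof.
elim: p x => [|y p IH] x //=; case: ifP => _; rewrite !inE.
  by case/or3P => [->|->|/IH]; rewrite ?orbT // => /orP [->|->]; rewrite ?orbT.
by case/orP => [->|/IH]; rewrite ?orbT // => /orP [->|->]; rewrite ?orbT.
Qed.

Lemma ex_last x p : last x (ex x p) = last x p.
Proof. by elim: p x => [|y p IH] x //=; case: ifP => _ /=; rewrite IH. Qed.

Lemma ex_size x p : size p <= size (ex x p).
Proof. by elim: p x => [|y p IH] x //=; case: ifP => _ /=; rewrite ltnS ?IH // ltnW ?ltnS. Qed.

Lemma ex_path x p : path (adj G') x p -> path (adj G) x (ex x p).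
Proof.
elim: p x => [|y p IH] x //= /andP [A P]; case: ifP => [/eqP E|nE].
  have /andP [Hx Hy] := ab_mem E.
  rewrite /= (adj_ab_w Hx).1 (adj_ab_w Hy).2 /=; exact: IH.
rewrite /= IH // andbT; apply: G'_G => //; by rewrite nE.
Qed.

Lemma ex_uniq x p : w \notin x :: p -> uniq (x :: p) -> uniq (x :: ex x p).
Proof.
elim: p x => [|y p IH] x //= Hw U; move: Hw; rewrite !inE !negb_or => /and3P [nwx nwy nwp].
move: U => /andP [Hx /andP [Hy U]]; move: Hx; rewrite inE negb_or => /andP [nxy nxp].
case: ifP => [/eqP E|nE].
  have /andP [Hx' Hy'] := ab_mem E.
  have Hanp : (a \notin p) && (b \notin p).
    case/orP: Hx' => /eqP ex; case/orP: Hy' => /eqP ey; subst; rewrite ?eqxx // in nxy;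
    by rewrite ?nxp ?Hy.
  case/andP: Hanp => ha hb.
  rewrite ex_id // /= !inE !negb_or eq_sym nwx nxy nxp nwy nwp Hy U.
  by [].
rewrite /= inE negb_or nxy /=.
have -> : x \notin ex y p.
  by apply/negP => /mem_ex /orP [/eqP exw|]; [rewrite exw eqxx in nwx | rewrite (negbTE nxp)].
have := IH y; rewrite /= !inE negb_or nwy nwp Hy U /=; by apply.
Qed.

Lemma ex_uses (e : {set V}) x p : walk_uses e x p -> e != [set a; b] -> walk_uses e x (ex x p).
Proof.
elim: p x => [|y p IH] x //=; rewrite walk_uses_cons => H ne.
case: ifP => [/eqP E|nE]; rewrite !walk_uses_cons.
  case/orP: H => [/eqP E'|H]; first by rewrite -E' E eqxx in ne.
  by rewrite IH // !orbT.
by case/orP: H => [->//|H]; rewrite IH // orbT.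
Qed.

Lemma ex_uses_ab x p : walk_uses [set a; b] x p ->
  walk_uses [set w; a] x (ex x p) && walk_uses [set w; b] x (ex x p).
Proof.
elim: p x => [|y p IH] x //=; rewrite walk_uses_cons => H.
case: ifP => [/eqP E|nE]; rewrite !walk_uses_cons.
  have /andP [Hx Hy] := ab_mem E.
  have nxy : x != y.
    by apply/eqP => exy; move: (cards2 a b); rewrite Hab -E exy setUid cards1.
  case/orP: Hx => /eqP ex; case/orP: Hy => /eqP ey; subst; rewrite ?eqxx // in nxy.
    apply/andP; split; apply/orP; [left|right; apply/orP; left] => //.
    by rewrite setUC.
  apply/andP; split; apply/orP; [right; apply/orP; left|left] => //.
  by rewrite setUC.
case/orP: H => [/eqP E|H]; first by rewrite E eqxx in nE.
by case/andP: (IH _ H) => -> ->; rewrite !orbT.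
Qed.

Lemma path_notw x p : path (adj G') x p -> w \notin p.
Proof.
elim: p x => [|y p IH] x //= /andP [A P]; rewrite inE negb_or (IH _ P) andbT.
apply/eqP => ewy; subst y; move: (G'_now A); by rewrite set22.
Qed.

Lemma e12 : [set w; a] != [set w; b].
Proof.
apply/eqP => E; have : a \in [set w; b] by rewrite -E set22.
by rewrite in_set2 eq_sym (negbTE Hwa) (negbTE Hab).
Qed.

Lemma card_G' : #|G'| < #|G|.
Proof.
rewrite /G' cardsU1 (cardsD1 [set w; a] G) He1 (cardsD1 [set w; b] (G :\ [set w; a])).
have H2 : [set w; b] \in G :\ [set w; a] by rewrite !inE eq_sym e12 He2.
rewrite H2; move: (#|_ :\ _|) => n.
by case: (_ \notin _); rewrite /= !add1n ?add0n ltnS ?leqnSn.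
Qed.

Lemma last_notin x p : x \notin p -> last x p = x -> p = [::].
Proof.
case: p => [//|t p] /= nx E; have := mem_last t p.
by rewrite E => H; rewrite H in nx.
Qed.

Lemma forest' : is_forest G -> is_forest G'.
Proof.
move=> HF [x [p [U Sz P A]]].
have nwp := path_notw P.
have nwx : x != w.
  by move: (G'_now A); rewrite in_set2 negb_or => /andP [_ H]; rewrite eq_sym.
case: (eqVneq [set last x p; x] [set a; b]) => Eab.
  have /andP [Hl Hx] := ab_mem Eab.
  have nlx : last x p != x.
    apply/eqP => E; move: (cards2 a b); rewrite Hab -Eab E setUid cards1 //.
  have Ha : (a == last x p) || (a == x) by rewrite -in_set2 Eab set21.
  have Hb : (b == last x p) || (b == x) by rewrite -in_set2 Eab set22.
  move: U Sz P A Eab Hl nwp nlx Ha Hb; case/lastP: p => [|p0 l] //.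
  rewrite last_rcons => U Sz P A Eab Hl nwp nlx Ha Hb.
  move: U; rewrite /= rcons_uniq mem_rcons inE negb_or => /andP [/andP [nxl nxp0] /andP [nlp0 U0]].
  have [hap hbp] : (a \notin p0) /\ (b \notin p0).
    by split; [case/orP: Ha | case/orP: Hb] => /eqP ->.
  move: P; rewrite rcons_path => /andP [P0 Al].
  have PG0 : path (adj G) x p0 by rewrite -(ex_id x hap hbp); exact: ex_path.
  have AG : adj G (last x p0) l.
    apply: G'_G => //; apply/eqP => E.
    have /andP [Hm _] := ab_mem E.
    have Hm' : (last x p0 == l) || (last x p0 == x).
      by case/orP: Hm => /eqP ->; rewrite ?Ha ?Hb ?(eq_sym l) ?(eq_sym x).
    case/orP: Hm' => /eqP Em.
      by have := mem_last x p0; rewrite Em inE (negbTE nlp0) eq_sym (negbTE nxl).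
    by move: Sz; rewrite (last_notin nxp0 Em).
  apply: HF; exists x, (rcons (rcons p0 l) w); split.
  - rewrite -rcons_cons rcons_uniq; apply/andP; split.
      by rewrite inE negb_or eq_sym nwx nwp.
    by rewrite /= rcons_uniq mem_rcons inE negb_or nxl nxp0 nlp0 U0.
  - by rewrite !size_rcons.
  - by rewrite !rcons_path PG0 AG /= last_rcons; exact: (adj_ab_w Hl).1.
  - by rewrite last_rcons; exact: (adj_ab_w Hx).2.
have nwxp : w \notin x :: p by rewrite inE negb_or eq_sym nwx nwp.
apply: HF; exists x, (ex x p); split.
- exact: ex_uniq.
- exact: leq_trans Sz (ex_size x p).
- exact: ex_path.
- by rewrite ex_last; apply: G'_G.
Qed.

Section Pairs2.
Variables (r : nat) (pairs : 'I_r -> V * V).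
Hypotheses (Hnt : w \notin terminals pairs) (HR : r_forest (complete_edges V) pairs G).

Lemma filter_uniq_cons x p : x != w -> uniq (x :: p) -> uniq (x :: filter (predC1 w) p).
Proof. by move=> nx U; have := filter_uniq (predC1 w) U; rewrite /= nx. Qed.

Lemma walk_G' v u p : v != w -> u != w -> walk G v p u -> exists p', walk G' v p' u.
Proof.
move=> nv nu; rewrite /walk => /andP [P /eqP L]; subst u.
move: nu; case: (shortenP P) => p' P' U' _ nu.
have [P'' L'' _ _] := contract (leqnn _) P' U' nv nu.
by exists (filter (predC1 w) p'); rewrite P'' L'' eqxx.
Qed.

Lemma on_path_G' v u (e : {set V}) : v != w -> u != w -> w \notin e ->
  on_path G v u e -> on_path G' v u e.
Proof.
move=> nv nu ne [p [/andP [P /eqP L] U W]].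
have [P' L' W1 _] := contract (leqnn _) P U nv (ltac:(by rewrite L)).
exists (filter (predC1 w) p); split.
- by rewrite /walk P' L' L eqxx.
- exact: filter_uniq_cons.
- exact: W1.
Qed.

Lemma on_path_G'_ab v u : v != w -> u != w ->
  on_path G v u [set w; a] -> on_path G' v u [set a; b].
Proof.
move=> nv nu [p [/andP [P /eqP L] U W]].
have [P' L' _ W2] := contract (leqnn _) P U nv (ltac:(by rewrite L)).
exists (filter (predC1 w) p); split.
- by rewrite /walk P' L' L eqxx.
- exact: filter_uniq_cons.
- apply: W2; have := walk_uses_mem W (set21 w a).
  by rewrite inE eq_sym (negbTE nv).
Qed.

Lemma r_forest_G' : r_forest (complete_edges V) pairs G'.
Proof.
case: HR => HS HF Hc Hp; split.
- apply/subsetP => e; rewrite /G' !inE => /orP [/eqP ->|/and3P [_ _ He]].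
    by rewrite cards2 Hab.
  by move/subsetP: HS => /(_ e He); rewrite inE.
- exact: forest' HF.
- move=> i; have [n1 n2] := notterm Hnt i.
  have [p Hw] := Hc i; apply: walk_G' Hw; by rewrite eq_sym.
- move=> e He; case: (eqVneq e [set a; b]) => [->|ne].
    have [i Hi] := Hp _ He1; have [n1 n2] := notterm Hnt i; exists i.
    by apply: on_path_G'_ab => //; rewrite eq_sym.
  have [i Hi] := Hp _ (G'_G He ne); have [n1 n2] := notterm Hnt i; exists i.
  by apply: on_path_G' => //; rewrite 1?eq_sym //; exact: G'_now.
Qed.

End Pairs2.

Lemma on_path_back v u (e : {set V}) : v != w -> on_path G' v u e ->
  (e != [set a; b] -> on_path G v u e) /\
  (e = [set a; b] -> on_path G v u [set w; a] /\ on_path G v u [set w; b]).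
Proof.
move=> nv [p [/andP [P /eqP L] U W]].
have nwp : w \notin v :: p by rewrite inE negb_or eq_sym nv (path_notw P).
have Hwk : walk G v (ex v p) u by rewrite /walk ex_path // ex_last L eqxx.
have U' := ex_uniq nwp U.
split => [ne|Ee].
  by exists (ex v p); split => //; apply: ex_uses.
subst e; have /andP [W1 W2] := ex_uses_ab W.
by split; exists (ex v p).
Qed.


Lemma perm5 (s1 s2 s3 : seq {set V}) (x y : {set V}) :
  perm_eq (s1 ++ x :: s2 ++ y :: s3) (x :: y :: (s1 ++ s2 ++ s3)).
Proof.
apply/permP => q; rewrite /= !count_cat /= ?count_cat /=.
move: (q x) (q y) => [] []; move: (count q s1) (count q s2) (count q s3) => n1 n2 n3 /=; lia.
Qed.

Lemma perm4 (s1 s2 s3 : seq {set V}) (z : {set V}) :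
  perm_eq (s1 ++ s2 ++ z :: s3) (z :: (s1 ++ s2 ++ s3)).
Proof.
apply/permP => q; rewrite /= !count_cat /= ?count_cat /=.
move: (q z) => []; move: (count q s1) (count q s2) (count q s3) => n1 n2 n3 /=; lia.
Qed.

Lemma ab_notin : is_forest G -> [set a; b] \notin G.
Proof.
move=> HF; apply/negP => Hab'; apply: HF; exists w, [:: a; b]; split => //.
- by rewrite /= !inE negb_or Hwa Hwb Hab.
- by rewrite /= /adj He1 Hab'.
- by rewrite /= /adj setUC.
Qed.

Lemma decomp2 (s : seq {set V}) (x y : {set V}) : x \in s -> y \in s -> x != y ->
  exists s1 s2 s3, s = s1 ++ x :: s2 ++ y :: s3 \/ s = s1 ++ y :: s2 ++ x :: s3.
Proof.
move=> Hx Hy nxy; case/splitPr: Hx Hy => s1 t.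
rewrite mem_cat inE (eq_sym y) (negbTE nxy) /= => /orP [Hy|Hy].
  case/splitPr: Hy => s1a s1b; exists s1a, s1b, t; right.
  by rewrite -catA.
by case/splitPr: Hy => t1 t2; exists s1, t1, t2; left.
Qed.

Section ObjG.
Local Open Scope ring_scope.
Variables (R : realFieldType) (chat : {set V} -> R) (r : nat) (pairs : 'I_r -> V * V)
  (Phi : ('I_r -> R) -> R).
Hypotheses (Hnt : w \notin terminals pairs) (HF : is_forest G)
  (H0a : 0 <= chat [set w; a]) (H0b : 0 <= chat [set w; b])
  (Htri : chat [set a; b] <= chat [set w; a] + chat [set w; b])
  (Hmono : forall t t' : 'I_r -> R, (forall i, t i <= t' i) -> Phi t <= Phi t').

Lemma obj_G' : obj pairs Phi G' chat <= obj pairs Phi G chat.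
Proof.
have [s Ps ->] := obj_attain pairs Phi G chat.
have Us : uniq s by rewrite (perm_uniq Ps) enum_uniq.
have mems : forall e, (e \in s) = (e \in G) by move=> e; rewrite (perm_mem Ps) mem_enum.
have [s1 [s2 [s3 Es]]] : exists s1 s2 s3 : seq {set V}, exists x y : {set V},
    [/\ s = s1 ++ x :: s2 ++ y :: s3, 0 <= chat x, chat [set a; b] <= chat x + chat y &
        (x == [set w; a]) && (y == [set w; b]) || (x == [set w; b]) && (y == [set w; a])].
  have M1 : [set w; a] \in s by rewrite mems.
  have M2 : [set w; b] \in s by rewrite mems.
  have [s1 [s2 [s3 [E|E]]]] := decomp2 M1 M2 e12.
    exists s1, s2, s3, [set w; a], [set w; b]; split => //; by rewrite !eqxx.
  exists s1, s2, s3, [set w; b], [set w; a]; split => //; rewrite ?eqxx ?orbT //.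
  by rewrite addrC.
case: Es => x [y [Es Hx Hz Hxy]].
have nab : [set a; b] \notin s by rewrite mems ab_notin.
have Px := perm5 s1 s2 s3 x y.
have Pz := perm4 s1 s2 s3 [set a; b].
have U' := Us; rewrite Es (perm_uniq Px) !cons_uniq in_cons negb_or in U'.
case/and3P: U' => /andP [nxy nxr] nyr Ur.
have memz : forall e, (e \in s) = [|| e == x, e == y | e \in s1 ++ s2 ++ s3].
  by move=> e; rewrite Es (perm_mem Px) !in_cons.
set s' := s1 ++ s2 ++ [set a; b] :: s3.
have mem' : forall e, (e \in s') = (e == [set a; b]) || (e \in s1 ++ s2 ++ s3).
  by move=> e; rewrite /s' (perm_mem Pz) in_cons.
have nabr : [set a; b] \notin s1 ++ s2 ++ s3.
  by move: nab; rewrite memz !negb_or => /and3P [_ _ ->].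
have Ps' : perm_eq s' (enum G').
  apply: uniq_perm; [ | exact: enum_uniq | ].
    by rewrite /s' (perm_uniq Pz) cons_uniq nabr Ur.
  move=> e; rewrite mem_enum mem' /G' !inE.
  case: (eqVneq e [set a; b]) => //= ne.
  rewrite -mems memz.
  case/orP: Hxy => /andP [/eqP Ex /eqP Ey]; subst x y.
    case: (eqVneq e [set w; a]) => [->|n1]; first by rewrite (negbTE nxr) andbF.
    case: (eqVneq e [set w; b]) => [->|n2] //=; by rewrite (negbTE nyr).
  case: (eqVneq e [set w; a]) => [->|n1]; first by rewrite (negbTE nyr) andbF.
  case: (eqVneq e [set w; b]) => [->|n2] //=; by rewrite (negbTE nxr).
apply: le_trans (obj_le pairs Phi chat Ps') _.
rewrite /valf; apply: Hmono => i.
have [n1 n2] := notterm Hnt i.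
have nv : (pairs i).1 != w by rewrite eq_sym.
have Us2 : uniq (s1 ++ x :: s2 ++ y :: s3) by rewrite -Es.
have nab2 : [set a; b] \notin s1 ++ x :: s2 ++ y :: s3 by rewrite -Es.
have [C1 C2] := compare_completion Us2 nab2 Hx Hz.
rewrite /conn_time; apply: bigmax_le; first exact: bigmax_ge0.
move=> e He /asboolP Hp.
have [Hb1 Hb2] := on_path_back nv Hp.
rewrite Es; case: (eqVneq e [set a; b]) => [Ee|ne].
  have [P1 P2] := Hb2 Ee; subst e.
  apply: le_trans C2 _; apply: le_bigmax.
    by rewrite -Es memz eqxx orbT.
  by apply/asboolP; case/orP: Hxy => /andP [_ /eqP ->].
apply: le_trans (C1 e He ne) _; apply: le_bigmax.
  by rewrite -Es memz; move: He; rewrite mem' (negbTE ne) /= => ->; rewrite !orbT.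
by apply/asboolP; apply: Hb1.
Qed.
End ObjG.

End Shortcut.
End Graph.

Unset Implicit Arguments.
Local Open Scope ring_scope.

Theorem lemma3 (R : realFieldType) (V : finType)
  (E : {set {set V}}) (c : {set V} -> R)
  (r : nat) (pairs : 'I_r -> V * V) (Phi : ('I_r -> R) -> R)
  (chat : {set V} -> R) :
  (forall e, e \in E -> #|e| = 2)%N ->
  (forall e, e \in E -> 0 < c e) ->
  connected E ->
  (2 <= r)%N ->
  (forall t t' : 'I_r -> R, (forall i, t i <= t' i) -> Phi t <= Phi t') ->
  (forall x y : V, x != y -> is_sp_dist E c x y (chat [set x; y])) ->
  forall F : {set {set V}}, r_forest E pairs F ->
  exists Fhat : {set {set V}},
    [/\ r_forest (complete_edges V) pairs Fhat,
        obj pairs Phi Fhat chat <= obj pairs Phi F c &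
        (#|nonterminals pairs Fhat| <= 2 * r - 2)%N].
Proof.
move=> HE Hc _ _ Hmono Hsp F HRF.
have wl_ge0 : forall x p, path (adj E) x p -> 0 <= walk_len c x p.
  move=> x p; elim: p x => [|y p IH] x /=; first by rewrite /walk_len big_nil.
  move=> /andP [A P]; rewrite /walk_len /= big_cons; apply: addr_ge0.
    by apply: ltW; apply: Hc.
  exact: IH.
have wl_cat : forall x p q, walk_len c x (p ++ q) = walk_len c x p + walk_len c (last x p) q.
  move=> x p q; elim: p x => [|y p IH] x /=; first by rewrite /walk_len big_nil add0r.
  by rewrite /walk_len /= !big_cons -addrA; congr (_ + _); apply: IH.
have chat_le : forall e, e \in E -> chat e <= c e.
  move=> e He; have /cards2P [x [y [nxy Exy]]] : #|e| == 2 by rewrite HE.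
  subst e; have [_ Hmin] := Hsp x y nxy.
  have W : walk E x [:: y] y by rewrite /walk /= eqxx andbT andbT.
  by have := Hmin _ W; rewrite /walk_len /= big_cons big_nil addr0.
have chat_ge0 : forall x y, x != y -> 0 <= chat [set x; y].
  move=> x y nxy; have [[p [/andP [P _] <-]] _] := Hsp x y nxy; exact: wl_ge0.
have chat_tri : forall x y z, x != y -> y != z -> x != z ->
    chat [set x; z] <= chat [set x; y] + chat [set y; z].
  move=> x y z nxy nyz nxz.
  have [[p1 [/andP [P1 /eqP L1] <-]] _] := Hsp x y nxy.
  have [[p2 [/andP [P2 /eqP L2] <-]] _] := Hsp y z nyz.
  have [_ Hmin] := Hsp x z nxz.
  have W : walk E x (p1 ++ p2) z by rewrite /walk cat_path P1 L1 P2 last_cat L1 L2 eqxx.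
  by have := Hmin _ W; rewrite wl_cat L1.
have HRc : r_forest (complete_edges V) pairs F.
  case: HRF => HS HF H3 H4; split => //.
  apply/subsetP => e He; rewrite inE HE //; by move/subsetP: HS; apply.
have Hobj0 : obj pairs Phi F chat <= obj pairs Phi F c.
  apply: obj_mono => s Ps; rewrite /valf; apply: Hmono => i.
  rewrite /conn_time; apply: bigmax_le; first exact: bigmax_ge0.
  move=> e He Hp; apply: le_trans (le_bigmax _ He Hp).
  rewrite /completion big_seq [X in _ <= X]big_seq; apply: ler_sum => e' He'.
  apply: chat_le; have : e' \in s by exact: mem_take He'.
  rewrite (perm_mem Ps) mem_enum; case: HRF => HS _ _ _; by move/subsetP: HS; apply.
suff : forall n (G : {set {set V}}), (#|G| <= n)%N -> r_forest (complete_edges V) pairs G ->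
  obj pairs Phi G chat <= obj pairs Phi F c ->
  exists Fhat : {set {set V}},
    [/\ r_forest (complete_edges V) pairs Fhat,
        obj pairs Phi Fhat chat <= obj pairs Phi F c &
        (#|nonterminals pairs Fhat| <= 2 * r - 2)%N].
  by move/(_ #|F| F (leqnn _) HRc Hobj0).
elim=> [|n IH] G Hn HRG Hobj;
  (case: (leqP #|nonterminals pairs G| (2 * r - 2)) => Hcnt; first by exists G);
  (case: (boolP [exists v, (v \in nonterminals pairs G) && (deg G v == 2)]); last first;
    [ move/existsPn => Hall; exfalso; move: Hcnt; rewrite ltnNge count_nonterm //;
      by move=> v Hv; move: (Hall v); rewrite Hv |
      move/existsP => [v /andP [Hv /eqP Hd]]]).
  have : (0 < #|G|)%N.
    have : (0 < deg G v)%N by rewrite Hd.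
    by rewrite /deg !card_gt0; case/set0Pn => e; rewrite inE => /andP [He _]; apply/set0Pn; exists e.
  by rewrite lt0n; move: Hn; rewrite leqn0 => ->.
have HRG' := HRG; case: HRG' => HS HF _ _.
have HG := simple_complete HS.
have Hnt : v \notin terminals pairs by move: Hv; rewrite inE => /andP [].
have /cards2P [e1 [e2 [ne12 E12]]] : #|[set e in G | v \in e]| == 2 by rewrite -/(deg G v) Hd.
have : e1 \in [set e in G | v \in e] by rewrite E12 set21.
rewrite inE => /andP [He1 Hv1].
have : e2 \in [set e in G | v \in e] by rewrite E12 set22.
rewrite inE => /andP [He2 Hv2].
have [a [nav Ea]] := edge2 HG He1 Hv1.
have [b [nbv Eb]] := edge2 HG He2 Hv2.
subst e1 e2.
have Hab : a != b by apply: contraNneq ne12 => ->.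
have Hwa : v != a by rewrite eq_sym.
have Hwb : v != b by rewrite eq_sym.
have Hdeg : forall e, e \in G -> v \in e -> e = [set v; a] \/ e = [set v; b].
  move=> e He Hve; have : e \in [set e in G | v \in e] by rewrite inE He Hve.
  by rewrite E12 in_set2 => /orP [] /eqP ->; [left|right].
have Htri : chat [set a; b] <= chat [set v; a] + chat [set v; b].
  by have H := chat_tri a v b nav Hwb Hab; rewrite (setUC [set a] [set v]) in H.
have HR' := r_forest_G' HG Hab Hwa Hwb He1 He2 Hdeg Hnt HRG.
have Ho' := obj_G' Hab Hwa Hwb He1 He2 Hdeg Hnt HF (chat_ge0 _ _ Hwa) (chat_ge0 _ _ Hwb) Htri Hmono.
have Hc' := card_G' Hab Hwa He1 He2.
apply: (IH (G' G v a b)) => //.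
  by rewrite -ltnS; apply: leq_trans Hc' Hn.
exact: le_trans Ho' Hobj.
Qed.
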